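(* Fix $n,L\ge1$, $a_0\in\mathbb{R}^L_{++}$ with $\sum_\ell a_{0,\ell}=1$, and vectors $\hat b_\ell=(\hat b_{\ell,0},\dots,\hat b_{\ell,L})\ge0$ ($\ell=1,\dots,L$) with $\hat b_{\ell,0}>0$ and $\sum_{\ell'=0}^L\hat b_{\ell,\ell'}=1$. There exists $\bar\varepsilon>0$ such that, whenever the requirements are $b_\ell=(1-\varepsilon_\ell)\hat b_\ell$ with $\varepsilon_\ell\in(0,\bar\varepsilon)$ for all $\ell$, every $\mathcal{Q}$-clustered structure $a^{\mathcal{Q}}$ (for every partition $\mathcal{Q}$ of $\{1,\dots,n\}$) is a Nash equilibrium of the $n$-fold replicate game $\mathcal{G}^n(a_0,b)$.
   Context: Base game: sectors $0$ (labor) and $1,\dots,L$; household consumption shares $a_0\in\mathbb{R}^L_{++}$, $\sum a_{0,\ell}=1$; sector-$\ell$ requirements $b_\ell=(b_{\ell,0},\dots,b_{\ell,L})\ge0$, $b_{\ell,0}>0$, $\sum_{\ell'}b_{\ell,\ell'}\le1$. The $n$-fold replicate $\mathcal{G}^n(a_0,b)$: firms $M=\{1,\dots,nL\}$, $M_\ell=\{(\ell-1)n+1,\dots,\ell n\}$ (firm $(\ell-1)n+c$ is the sector-$\ell$ firm of country $c\in\{1,\dots,n\}$); household share $a_{0,i}=a_{0,\ell}/n$ for $i\in M_\ell$; every $i\in M_\ell$ has requirement vector $b_\ell$ and $\varepsilon_i=1-\sum_{\ell'}b_{\ell,\ell'}$. Firm $i$ chooses $a_i\in S_i=\{a_i\in\mathbb{R}^{M\cup\{0\}}_+: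 a_{i,0}=b_{\ell,0},\ \sum_{j\in M_{\ell'}}a_{i,j}=b_{\ell,\ell'}\ \forall\ell'\ge1\}$ and receives payoff $\pi_i(a)=\varepsilon_i\bar v_i$, where $\bar v$ solves $\bar v_j=a_{0,j}+a_{0,j}\sum_k\varepsilon_k\bar v_k+\sum_ka_{k,j}\bar v_k$ ($j\in M$), $\sum_ka_{k,0}\bar v_k=1$. For a partition $\mathcal{Q}=\{Q_1,\dots,Q_K\}$ of $\{1,\dots,n\}$ let $Q_{\ell,k}=\{(\ell-1)n+c:c\in Q_k\}$. The $\mathcal{Q}$-clustered structure $a^{\mathcal{Q}}$: for $i\in Q_{\ell,k}$, $a_{i,0}=b_{\ell,0}$, $a_{i,i}=b_{\ell,\ell}$, $a_{i,j}=0$ for $j\in Q_{\ell,k}\setminus\{i\}$, $a_{i,j}=b_{\ell,\ell'}/|Q_k|$ for $j\in Q_{\ell',k}$ with $\ell'\notin\{0,\ell\}$, and $a_{i,j}=0$ otherwise. *)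

(* Defs.v *)
From HB Require Import structures.
From mathcomp Require Import all_boot all_order all_algebra.
From mathcomp Require Import reals.
Set Implicit Arguments. Unset Strict Implicit. Unset Printing Implicit Defensive.
Import Order.TTheory GRing.Theory Num.Theory.
Local Open Scope ring_scope.

Section Game.
Variables (R : realType) (n L : nat).
(* household consumption shares over sectors 1..L (indexed by 'I_L) *)
Variable a0 : 'I_L -> R.
(* requirements: b0 l = b_{l,0} (labor), b l l' = b_{l,l'} *)
Variable b0 : 'I_L -> R.
Variable b : 'I_L -> 'I_L -> R.

(* firm (l, c) = sector-l firm of country c *)
Definition firm : finType := ('I_L * 'I_n)%type.

(* a strategy of a firm is a vector in R^{M ∪ {0}}; None = labor (index 0) *)
Definition strategy := option firm -> R.
Definition profile := firm -> strategy.

Definition hshare (i : firm) : R := a0 i.1 / n%:R.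

Definition eps_firm (i : firm) : R := 1 - (b0 i.1 + \sum_(l' < L) b i.1 l').

Definition in_S (i : firm) (s : strategy) : Prop :=
  (forall j, 0 <= s j) /\ s None = b0 i.1 /\
  (forall l' : 'I_L, \sum_(c < n) s (Some (l', c)) = b i.1 l').

Definition is_value (a : profile) (v : firm -> R) : Prop :=
  (forall j : firm,
     v j = hshare j + hshare j * (\sum_(k : firm) eps_firm k * v k)
           + \sum_(k : firm) a k (Some j) * v k) /\
  \sum_(k : firm) a k None * v k = 1.

Definition upd (a : profile) (i : firm) (s : strategy) : profile :=
  fun k => if k == i then s else a k.

(* payoff pi_i(a) = eps_i * vbar_i, where vbar is the (unique) solution of the
   value system; Nash equilibrium: every a_i in S_i and no profitable
   unilateral deviation *)
Definition Nash (a : profile) : Prop :=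
  (forall i, in_S i (a i)) /\
  forall (i : firm) (s : strategy), in_S i s ->
  forall v v' : firm -> R, is_value a v -> is_value (upd a i s) v' ->
    eps_firm i * v' i <= eps_firm i * v i.

Definition clustered (Q : {set {set 'I_n}}) : profile :=
  fun i => fun j =>
    match j with
    | None => b0 i.1
    | Some (l', c') =>
        let B := pblock Q i.2 in
        if c' \in B then
          (if l' == i.1 then (if c' == i.2 then b i.1 i.1 else 0)
           else b i.1 l' / #|B|%:R)
        else 0
    end.
End Game.

(* Main.v *)
Require Import Defs.
From HB Require Import structures.
From mathcomp Require Import all_boot all_order all_algebra.
From mathcomp Require Import reals.
From mathcomp Require Import ring lra.
Set Implicit Arguments. Unset Strict Implicit. Unset Printing Implicit Defensive.
Import Order.TTheory GRing.Theory Num.Theory.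
Local Open Scope ring_scope.

Lemma sum_firm (R : realType) n L (F : firm n L -> R) : \sum_(k : firm n L) F k = \sum_(l < L) \sum_(c < n) F (l, c).
Proof. rewrite pair_big /=. by apply: eq_bigr => -[]. Qed.

Section Lin.
Variable R : realType.

Lemma maxprin (T : finType) (M : T -> T -> R) (x y : T -> R) :
  (forall k j, 0 <= M k j) -> (forall k, \sum_j M k j < 1) ->
  (forall k, y k <= 0) -> (forall k, x k <= y k + \sum_j M k j * x j) ->
  forall k, x k <= 0.
Proof.
move=> M0 M1 y0 hx k.
case: (@arg_maxP _ R T k predT x erefl) => km _ kmax.
apply: (le_trans (kmax k erefl)).
rewrite leNgt; apply/negP => xpos.
have : x km <= \sum_j M km j * x km.
  apply: (le_trans (hx km)); rewrite -[X in _ <= X]add0r lerD //.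
  apply: ler_sum => j _; apply: ler_wpM2l => //; exact: kmax.
rewrite -mulr_suml => h.
by rewrite leNgt (gtr_pMl _ xpos) M1 in h.
Qed.

Lemma posit (T : finType) (M : T -> T -> R) (x y : T -> R) :
  (forall k j, 0 <= M k j) -> (forall k, \sum_j M k j < 1) ->
  (forall k, 0 <= y k) -> (forall k, x k = y k + \sum_j M k j * x j) ->
  forall k, 0 <= x k.
Proof.
move=> M0 M1 y0 hx k; rewrite -oppr_le0.
apply: (@maxprin T M (fun k => - x k) (fun k => - y k)) => // [j|j].
  by rewrite oppr_le0.
rewrite hx opprD lerD2l -sumrN; apply: ler_sum => i _; by rewrite mulrN.
Qed.

Lemma solve (m : nat) (M : 'I_m -> 'I_m -> R) (y : 'I_m -> R) :
  (forall k j, 0 <= M k j) -> (forall k, \sum_j M k j < 1) ->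
  exists x : 'I_m -> R, forall k, x k = y k + \sum_j M k j * x j.
Proof.
move=> M0 M1.
pose A : 'M[R]_m := \matrix_(i, j) ((i == j)%:R - M j i).
have mA : forall (w : 'rV[R]_m) k, (w *m A) 0 k = w 0 k - \sum_i M k i * w 0 i.
  move=> w k; rewrite mxE.
  under eq_bigr do rewrite mxE mulrBr.
  rewrite sumrB (bigD1 k) //= eqxx mulr1 big1 ?addr0 => [|i /negbTE ->]; last by rewrite mulr0.
  by congr (_ - _); apply: eq_bigr => i _; rewrite mulrC.
have hA : forall v : 'rV[R]_m, v *m A = 0 -> v = 0.
  move=> v hv.
  have eq : forall j, v 0 j = 0 + \sum_i M j i * v 0 i.
    move=> j; have := congr1 (fun w : 'rV[R]_m => w 0 j) hv; rewrite /= mA mxE add0r.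
    by move/eqP; rewrite subr_eq0 => /eqP.
  apply/rowP => j; rewrite mxE; apply/eqP; rewrite eq_le.
  rewrite (@maxprin _ M (fun j => v 0 j) (fun _ => 0)) //=; last by move=> k; rewrite -eq.
  by rewrite (@posit _ M (fun j => v 0 j) (fun _ => 0)).
have unitA : A \in unitmx.
  rewrite unitmxE unitfE; apply/negP => /det0P [v vn0 hv].
  by rewrite (hA v hv) eqxx in vn0.
exists (fun k => ((\row_j y j) *m invmx A) 0 k) => k.
have := congr1 (fun w : 'rV[R]_m => w 0 k) (mulmxKV unitA (\row_j y j)).
rewrite /= mA mxE => <-; by rewrite subrK.
Qed.
End Lin.

Section Main.
Variables (R : realType) (n L : nat) (hn : (0 < n)%N).
Variables (a0 : 'I_L -> R) (ha0 : forall l, 0 < a0 l) (ha0sum : \sum_(l < L) a0 l = 1).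
Variables (bh0 : 'I_L -> R) (bh : 'I_L -> 'I_L -> R)
  (hbh0 : forall l, 0 < bh0 l) (hbh : forall l l', 0 <= bh l l')
  (hbhsum : forall l, bh0 l + \sum_(l' < L) bh l l' = 1).
Variables (eps : 'I_L -> R) (heps : forall l, 0 < eps l < 1).
Variables (Q : {set {set 'I_n}}) (hQ : partition Q [set: 'I_n]).

Definition bb0 l := (1 - eps l) * bh0 l.
Definition bb l l' := (1 - eps l) * bh l l'.
Local Notation firm := (firm n L).
Local Notation a := (clustered bb0 bb Q).

Lemma eps_gt0 l : 0 < eps l. Proof. by case/andP: (heps l). Qed.
Lemma eps_lt1 l : eps l < 1. Proof. by case/andP: (heps l). Qed.
Lemma bb_ge0 l l' : 0 <= bb l l'.
Proof. by rewrite /bb mulr_ge0 // subr_ge0 ltW // eps_lt1. Qed.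
Lemma rowsum l : \sum_l' bb l l' = (1 - eps l) * (1 - bh0 l).
Proof. have h := hbhsum l; rewrite /bb -mulr_sumr; congr (_ * _). by rewrite -h addrAC subrr add0r. Qed.
Lemma rowsum_lt1 l : \sum_l' bb l l' < 1.
Proof.
rewrite rowsum; have := eps_gt0 l; have := eps_lt1 l; have := hbh0 l.
have : 0 <= \sum_l' bh l l' by apply: sumr_ge0.
have := hbhsum l; nra.
Qed.
Lemma eps_firmE (k : firm) : eps_firm bb0 bb k = eps k.1.
Proof. rewrite /eps_firm rowsum /bb0; ring. Qed.

Lemma coverQ : cover Q = [set: 'I_n].
Proof. by case/and3P: hQ => /eqP. Qed.
Lemma trivQ : trivIset Q.
Proof. by case/and3P: hQ. Qed.
Lemma in_own c : c \in pblock Q c.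
Proof. by rewrite mem_pblock coverQ inE. Qed.
Lemma card_pblock c : (0 < #|pblock Q c|)%N.
Proof. by apply/card_gt0P; exists c; exact: in_own. Qed.

Lemma sumS (l : 'I_L) (s : strategy R n L) (f : 'I_L -> R) :
  (forall l', \sum_c s (Some (l', c)) = bb l l') ->
  \sum_(j : firm) s (Some j) * f j.1 = \sum_l' bb l l' * f l'.
Proof.
move=> hs; rewrite sum_firm; apply: eq_bigr => l' _.
by rewrite -hs mulr_suml.
Qed.

Lemma bb0_ge0 l : 0 <= bb0 l.
Proof. by rewrite /bb0 mulr_ge0 // ?subr_ge0 ?ltW ?eps_lt1 ?hbh0. Qed.

Lemma clS (k : firm) : in_S bb0 bb k (a k).
Proof.
split; [|split] => //.
- case => [[l' c]|] /=; last exact: bb0_ge0.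
  case: ifP => // _; case: ifP => _; [case: ifP => _ //|]; first exact: bb_ge0.
  by rewrite divr_ge0 ?bb_ge0.
- move=> l' /=.
  case: (eqVneq l' k.1) => [->|ne].
  + rewrite (bigD1 k.2) //= in_own !eqxx big1 ?addr0 // => c /negbTE ->.
    by case: ifP.
  + rewrite -big_mkcond /= sumr_const -(mulr_natr (bb k.1 l' / _)) divfK //.
    by rewrite pnatr_eq0 -lt0n card_pblock.
Qed.

Hypothesis hL : (0 < L)%N.

Lemma bb_le_sum l l' : bb l l' <= \sum_j bb l j.
Proof. rewrite (bigD1 l') //= lerDl; apply: sumr_ge0 => j _; exact: bb_ge0. Qed.

Lemma hshare_ge0 (j : firm) : 0 <= hshare a0 j.
Proof. by rewrite /hshare divr_ge0 ?ler0n ?ltW. Qed.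

Lemma blk_same c c' : c' \in pblock Q c -> pblock Q c' = pblock Q c.
Proof. exact: same_pblock trivQ. Qed.
Lemma blk_out c c' c'' : c \notin pblock Q c'' -> c' \in pblock Q c -> c' \notin pblock Q c''.
Proof.
move=> hc hc'; apply/negP => h.
have e1 := blk_same h; have e2 := blk_same hc'.
by move: hc; rewrite -e1 e2 in_own.
Qed.

Section Dev.
Variable (i : firm).
Definition Bi := pblock Q i.2.
Definition Dd := (1 - bb i.1 i.1)^-1.
Definition cvec (l' : 'I_L) := if l' == i.1 then 0 else bb l' i.1 * Dd / #|Bi|%:R.
Variables (Y P : 'I_L -> R).
Hypothesis hY : forall k, Y k = cvec k + \sum_j bb k j * Y j.
Hypothesis hP : forall k, P k = eps k + \sum_j bb k j * P j.
Definition q (j : firm) := (if j.2 \in Bi then Y j.1 else 0) + (if j == i then Dd else 0).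
Definition hp := \sum_(j : firm) hshare a0 j * P j.1.
Definition hq := \sum_(j : firm) hshare a0 j * q j.
Definition HH := hq / (1 - hp).
Definition g (j : firm) := q j + P j.1 * HH.

Lemma bii_lt1 : bb i.1 i.1 < 1.
Proof. exact: le_lt_trans (bb_le_sum _ _) (rowsum_lt1 _). Qed.
Lemma Dd_gt0 : 0 < Dd.
Proof. by rewrite /Dd invr_gt0 subr_gt0 bii_lt1. Qed.
Lemma Dd_eq : bb i.1 i.1 * Dd = Dd - 1.
Proof.
have h : 1 - bb i.1 i.1 != 0 by rewrite subr_eq0 eq_sym lt_eqF // bii_lt1.
rewrite /Dd; apply: (mulfI h); rewrite mulrBr mulr1 mulrCA mulfV //; ring.
Qed.
Lemma cvec_ge0 k : 0 <= cvec k.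
Proof.
rewrite /cvec; case: ifP => // _.
by rewrite divr_ge0 // mulr_ge0 ?bb_ge0 // ltW // Dd_gt0.
Qed.
Lemma Y_ge0 k : 0 <= Y k.
Proof. exact: (posit bb_ge0 rowsum_lt1 cvec_ge0 hY). Qed.
Lemma P_ge0 k : 0 <= P k.
Proof. by apply: (posit bb_ge0 rowsum_lt1 _ hP) => l; rewrite ltW // eps_gt0. Qed.
Lemma P_le1 k : P k <= 1.
Proof.
rewrite -subr_le0.
apply: (@maxprin _ _ bb (fun k => P k - 1) (fun k => eps k + \sum_j bb k j - 1)) => //.
- exact: bb_ge0.
- exact: rowsum_lt1.
- move=> l; rewrite rowsum; have := eps_gt0 l; have := eps_lt1 l; have := hbh0 l; nra.
- move=> l; rewrite {1}hP.
  have -> : \sum_j bb l j * (P j - 1) = \sum_j bb l j * P j - \sum_j bb l j.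
    by rewrite -sumrB; apply: eq_bigr => j _; rewrite mulrBr mulr1.
  by rewrite le_eqVlt; apply/orP; left; apply/eqP; ring.
Qed.
Lemma P_lt1 k : P k < 1.
Proof.
rewrite hP.
have h1 : \sum_j bb k j * P j <= \sum_j bb k j.
  by apply: ler_sum => j _; rewrite ler_piMr ?bb_ge0 ?P_le1.
have := rowsum k; have := eps_gt0 k; have := eps_lt1 k; have := hbh0 k; move: h1.
set s1 := \sum_j bb k j * P j; set s2 := \sum_j bb k j; nra.
Qed.

Lemma hp_eq : hp = \sum_l a0 l * P l.
Proof.
rewrite /hp sum_firm; apply: eq_bigr => l _ /=.
rewrite /hshare /= sumr_const card_ord -(mulr_natr (_ * P l)) mulrAC divfK //.
by rewrite pnatr_eq0 -lt0n.
Qed.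
Lemma hp_lt1 : hp < 1.
Proof.
rewrite hp_eq -ha0sum; apply: ltr_sum.
  by apply/hasP; exists (Ordinal hL) => //; rewrite mem_index_enum.
by move=> l _; rewrite gtr_pMr ?ha0 ?P_lt1.
Qed.
Lemma q_ge0 j : 0 <= q j.
Proof.
rewrite /q addr_ge0 //; first by case: ifP => // _; exact: Y_ge0.
by case: ifP => // _; rewrite ltW // Dd_gt0.
Qed.
Lemma HH_ge0 : 0 <= HH.
Proof.
apply: divr_ge0; last by rewrite subr_ge0 ltW // hp_lt1.
by apply: sumr_ge0 => j _; rewrite mulr_ge0 ?hshare_ge0 ?q_ge0.
Qed.
Lemma g_ge0 j : 0 <= g j.
Proof. by rewrite /g addr_ge0 ?q_ge0 // mulr_ge0 ?P_ge0 ?HH_ge0. Qed.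

Lemma Lq (k : firm) : \sum_(j : firm) a k (Some j) * q j = q k - (k == i)%:R.
Proof.
have ai : a k (Some i) = a k (Some (i.1, i.2)) by case: (i).
have -> : \sum_(j : firm) a k (Some j) * q j =
   \sum_(j : firm) a k (Some j) * (if j.2 \in Bi then Y j.1 else 0) + a k (Some i) * Dd.
  rewrite /q; under eq_bigr do rewrite mulrDr.
  rewrite big_split /=; congr (_ + _).
  by rewrite (bigD1 i) //= eqxx big1 ?addr0 // => j /negbTE ->; rewrite mulr0.
rewrite ai /q /Bi /=.
case hk: (k.2 \in pblock Q i.2).
- have eB := blk_same hk.
  have -> : \sum_(j : firm) a k (Some j) * (if j.2 \in pblock Q i.2 then Y j.1 else 0)
          = \sum_(j : firm) a k (Some j) * Y j.1.
    apply: eq_bigr => -[l' c] _ /=; rewrite eB.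
    by case: (c \in pblock Q i.2); rewrite ?mul0r ?mulr0.
  rewrite (sumS _ (proj2 (proj2 (clS k)))).
  have hYk : \sum_l' bb k.1 l' * Y l' = Y k.1 - cvec k.1 by rewrite [Y k.1]hY addrC addKr.
  rewrite hYk eB in_own /cvec.
  case: (eqVneq k i) => [->|nki].
  + by rewrite !eqxx Dd_eq subr0 /= addrA.
  + case: (eqVneq k.1 i.1) => e1.
    * have e2 : (i.2 == k.2) = false.
        apply/negP => /eqP e2; move/eqP: nki; apply.
        by move: e1 e2; case: (k) => ? ?; case: (i) => ? ? /= -> ->.
      rewrite e2 /=; ring.
    * rewrite /Bi /=; ring.
- have nki : (k == i) = false.
    by apply/negP => /eqP ek; move: hk; rewrite ek in_own.
  rewrite nki big1 => [|[l' c] _ /=]; last first.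
    by case: ifP => hc; rewrite ?mul0r // (negbTE (blk_out (negbT hk) hc)) mulr0.
  have -> : (i.2 \in pblock Q k.2) = false.
    apply/negP => h; have e1 := blk_same h.
    by move: hk; rewrite e1 in_own.
  by rewrite mul0r addr0 add0r /= oppr0.
Qed.

Lemma sum_g (s : strategy R n L) l :
  (forall l', \sum_c s (Some (l', c)) = bb l l') ->
  \sum_(j : firm) s (Some j) * g j =
  \sum_(j : firm) s (Some j) * q j + (\sum_l' bb l l' * P l') * HH.
Proof.
move=> hs; rewrite /g; under eq_bigr do rewrite mulrDr mulrA.
by rewrite big_split /= -mulr_suml (sumS _ hs).
Qed.

Lemma Lg (k : firm) : g k = (k == i)%:R + \sum_(j : firm) a k (Some j) * g j
    + eps_firm bb0 bb k * \sum_(j : firm) hshare a0 j * g j.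
Proof.
have hg : \sum_(j : firm) hshare a0 j * g j = hq + hp * HH.
  rewrite /g /hq /hp; under eq_bigr do rewrite mulrDr mulrA.
  by rewrite big_split /= mulr_suml.
have hHH : hq + hp * HH = HH.
  have h : 1 - hp != 0 by rewrite subr_eq0 eq_sym lt_eqF // hp_lt1.
  rewrite /HH; field; exact: h.
rewrite hg hHH eps_firmE (sum_g (proj2 (proj2 (clS k)))) Lq.
have hPk : \sum_l' bb k.1 l' * P l' = P k.1 - eps k.1 by rewrite [P k.1]hP addrC addKr.
rewrite hPk /g; ring.
Qed.

Lemma L7 (s : strategy R n L) : in_S bb0 bb i s ->
  \sum_(j : firm) s (Some j) * g j <= \sum_(j : firm) a i (Some j) * g j.
Proof.
move=> [s0 [_ hs]].
rewrite (sum_g hs) (sum_g (proj2 (proj2 (clS i)))) lerD2r Lq eqxx /q /Bi in_own eqxx.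
apply: (@le_trans _ _ (\sum_(j : firm) s (Some j) * (Y j.1 + (if j.1 == i.1 then Dd else 0)))).
  apply: ler_sum => j _; apply: ler_wpM2l; first exact: s0.
  apply: lerD; first by case: ifP => _ //; exact: Y_ge0.
  case: (eqVneq j i) => [->|_]; first by rewrite eqxx.
  by case: ifP => _ //; rewrite ltW // Dd_gt0.
rewrite (sumS (fun l' => Y l' + (if l' == i.1 then Dd else 0)) hs).
under eq_bigr do rewrite mulrDr.
have h2 : \sum_l' bb i.1 l' * (if l' == i.1 then Dd else 0) = bb i.1 i.1 * Dd.
  by rewrite (bigD1 i.1) //= eqxx big1 ?addr0 // => j /negbTE ->; rewrite mulr0.
rewrite big_split /= h2 [Y i.1]hY /cvec eqxx add0r Dd_eq /=.
by rewrite le_eqVlt; apply/orP; left; apply/eqP; ring.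
Qed.

Lemma value_id (a' : profile R n L) (w : firm -> R) : is_value a0 bb0 bb a' w ->
  \sum_(j : firm) hshare a0 j * g j + \sum_(k : firm) w k *
    (\sum_(j : firm) a' k (Some j) * g j
     + eps_firm bb0 bb k * (\sum_(j : firm) hshare a0 j * g j) - g k) = 0.
Proof.
move=> [hw _].
set G := \sum_(j : firm) hshare a0 j * g j.
set E := \sum_(k : firm) eps_firm bb0 bb k * w k.
have e1 : \sum_(k : firm) g k * w k = G + G * E
    + \sum_(j : firm) g j * \sum_(k : firm) a' k (Some j) * w k.
  rewrite (eq_bigr (fun j => hshare a0 j * g j + (hshare a0 j * g j) * E
      + g j * \sum_(k : firm) a' k (Some j) * w k)); last first.
    by move=> j _; rewrite [w j]hw -/E; ring.
  by rewrite !big_split /= -mulr_suml.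
have e2 : \sum_(j : firm) g j * \sum_(k : firm) a' k (Some j) * w k
    = \sum_(k : firm) w k * \sum_(j : firm) a' k (Some j) * g j.
  under eq_bigr do rewrite mulr_sumr.
  rewrite exchange_big /=; apply: eq_bigr => k _; rewrite mulr_sumr.
  by apply: eq_bigr => j _; ring.
have e3 : \sum_(k : firm) w k * (\sum_(j : firm) a' k (Some j) * g j
     + eps_firm bb0 bb k * G - g k)
   = \sum_(k : firm) w k * \sum_(j : firm) a' k (Some j) * g j + G * E
     - \sum_(k : firm) g k * w k.
  rewrite (eq_bigr (fun k => w k * \sum_(j : firm) a' k (Some j) * g j
      + G * (eps_firm bb0 bb k * w k) - g k * w k)); last by move=> k _; ring.
  by rewrite sumrB big_split /= -mulr_sumr.
rewrite e3 e1 e2; ring.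
Qed.

Lemma dev_ok (s : strategy R n L) : in_S bb0 bb i s ->
  forall v v' : firm -> R, is_value a0 bb0 bb a v -> is_value a0 bb0 bb (upd a i s) v' ->
  eps_firm bb0 bb i * v' i <= eps_firm bb0 bb i * v i.
Proof.
move=> hs v v' hv hv'.
set G := \sum_(j : firm) hshare a0 j * g j.
have G0 : 0 <= G by apply: sumr_ge0 => j _; rewrite mulr_ge0 ?hshare_ge0 ?g_ge0.
have c : forall k, \sum_(j : firm) a k (Some j) * g j + eps_firm bb0 bb k * G - g k
    = - (k == i)%:R.
  by move=> k; rewrite [g k]Lg -/G; ring.
have vi : v i = G.
  have := value_id hv; rewrite -/G.
  under eq_bigr do rewrite c.
  rewrite (bigD1 i) //= eqxx big1 => [|k /negbTE ->]; last by rewrite /= oppr0 mulr0.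
  rewrite addr0 /= mulrN1 => /eqP; rewrite subr_eq0 => /eqP ->. done.
have v'i : G + v' i * (\sum_(j : firm) s (Some j) * g j - \sum_(j : firm) a i (Some j) * g j - 1) = 0.
  have := value_id hv'; rewrite -/G.
  rewrite (bigD1 i) //=.
  rewrite [X in _ + (_ + X)]big1 => [|k nki]; last first.
    by rewrite /upd (negbTE nki) c (negbTE nki) /= oppr0 mulr0.
  rewrite addr0 /upd eqxx => h.
  have := c i; rewrite eqxx /= => ci.
  move: h ci; set X := \sum_(j : firm) a i (Some j) * g j.
  set S1 := \sum_(j : firm) s (Some j) * g j; set e := eps_firm bb0 bb i * G.
  set gi := g i; set y := v' i => h ci.
  have -> : S1 - X - 1 = S1 + e - gi by move: ci; rewrite mulr1n; lra.
  exact: h.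
have d0 := L7 hs.
rewrite eps_firmE; apply: ler_wpM2l; first exact: ltW (eps_gt0 _).
rewrite vi.
move: v'i d0; set S1 := \sum_(j : firm) s (Some j) * g j; set S2 := \sum_(j : firm) a i (Some j) * g j.
move: G0; set x := v' i; nra.
Qed.
End Dev.
End Main.

Theorem mainTheorem10 (R : realType) (n L : nat) (hn : (0 < n)%N) (hL : (0 < L)%N)
  (a0 : 'I_L -> R) (ha0 : forall l, 0 < a0 l) (ha0sum : \sum_(l < L) a0 l = 1)
  (bh0 : 'I_L -> R) (bh : 'I_L -> 'I_L -> R)
  (hbh0 : forall l, 0 < bh0 l) (hbh : forall l l', 0 <= bh l l')
  (hbhsum : forall l, bh0 l + \sum_(l' < L) bh l l' = 1) :
  exists epsbar : R, 0 < epsbar /\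
    forall eps : 'I_L -> R, (forall l, 0 < eps l < epsbar) ->
    forall Q : {set {set 'I_n}}, partition Q [set: 'I_n] ->
      Nash a0 (fun l => (1 - eps l) * bh0 l) (fun l l' => (1 - eps l) * bh l l')
        (clustered (fun l => (1 - eps l) * bh0 l) (fun l l' => (1 - eps l) * bh l l') Q).
Proof.
exists 1; split => // eps heps Q hQ.
change (Nash a0 (bb0 bh0 eps) (bb bh eps) (clustered (bb0 bh0 eps) (bb bh eps) Q)).
split; first exact: (clS hbh0 hbh heps hQ).
move=> i s hs v v' hv hv'.
have M0 := @bb_ge0 R L bh hbh eps heps.
have M1 := @rowsum_lt1 R L bh0 bh hbh0 hbh hbhsum eps heps.
have [Y hY] := solve (cvec bh eps Q i) M0 M1.
have [P hP] := solve eps M0 M1.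
exact: (dev_ok hn ha0 ha0sum hbh0 hbh hbhsum heps hQ hL hY hP hs hv hv').
Qed.
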